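(* Let $v$ be a pure bargaining game on $N$, i.e., $v(S)=0$ for all $S\ne N$, and let $n=|N|$. Let $i\in N$ and let $v_i$ be the component game (the unique $v_i\in\ell^2(V)$ with $v_i(\emptyset)=0$ and $\mathrm{d}v_i=P\mathrm{d}_iv$). Then for every $S\subset N\setminus\{i\}$, $$v_i(S\cup\{i\}) = \frac{1}{n2^n}\left(1+\frac{\binom{n}{0}+\cdots+\binom{n}{|S|}}{\binom{n-1}{|S|}}\right)v(N),\qquad v_i(S) = \frac{1}{n2^n}\left(1-\frac{\binom{n}{0}+\cdots+\binom{n}{|S|}}{\binom{n-1}{|S|}}\right)v(N).$$
   Context: Let $N$ be a finite set of players. A game is a function $v\colon 2^N\to\mathbb{R}$ with $v(\emptyset)=0$. The hypercube graph $G=(V,E)$ has $V=2^N$ and oriented edges $E=\{(S,S\cup\{i\}) : i\in N,\ S\subset N\setminus\{i\}\}$. $\ell^2(V)$ and $\ell^2(E)$ are the spaces of real functions on $V$ and $E$ with the standard inner products $\sum_{S}u(S)w(S)$ and $\sum_{e}f(e)g(e)$. $\mathrm{d}\colon \ell^2(V)\to\ell^2(E)$ is $\mathrm{d}u(S,S\cup\{i\}) = u(S\cup\{i\})-u(S)$. For $i\in N$, $\mathrm{d}_i\colon\ell^2(V)\to\ell^2(E)$ is defined by $\mathrm{d}_i u(S,S\cup\{j\}) = u(S\cup\{i\})-u(S)$ if $j=i$ and $0$ if $j\ne i$. $P$ is the orthogonal projection of $\ell^2(E)$ onto the range $\mathcal{R}(\mathrm{d})$. *)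

(* Defs.v *)
(* Players: a finite type T (N = [set: T]).
   Vertices V = {set T}; oriented edges (S, S ∪ {j}) with j ∉ S are encoded
   by pairs (S, j) with j \notin S. *)
From HB Require Import structures.
From mathcomp Require Import all_boot all_order all_algebra.
Set Implicit Arguments. Unset Strict Implicit. Unset Printing Implicit Defensive.
Import Order.TTheory GRing.Theory Num.Theory.
Local Open Scope ring_scope.

Definition vfun (T : finType) (R : realFieldType) := {set T} -> R.
(* l^2(E): value at edge (S, S ∪ {j}) is f S j (only meaningful for j \notin S) *)
Definition efun (T : finType) (R : realFieldType) := {set T} -> T -> R.

Definition einner (T : finType) (R : realFieldType) (f g : efun T R) : R :=
  \sum_(S : {set T}) \sum_(j | j \notin S) f S j * g S j.

Definition dV (T : finType) (R : realFieldType) (u : vfun T R) : efun T R :=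
  fun S j => u (j |: S) - u S.

Definition dI (T : finType) (R : realFieldType) (i : T) (u : vfun T R) : efun T R :=
  fun S j => if j == i then u (i |: S) - u S else 0.

(* g = P f, P the orthogonal projection of l^2(E) onto R(d):
   g lies in R(d) and f - g is orthogonal to R(d). *)
Definition is_proj_range_d (T : finType) (R : realFieldType) (f g : efun T R) : Prop :=
  (exists u : vfun T R, forall (S : {set T}) (j : T), j \notin S -> g S j = dV u S j) /\
  (forall w : vfun T R, einner (fun S j => f S j - g S j) (dV w) = 0).

Definition is_component_game (T : finType) (R : realFieldType) (v : vfun T R)
  (i : T) (vi : vfun T R) : Prop :=
  vi set0 = 0 /\ is_proj_range_d (dI i v) (dV vi).

Definition pure_bargaining (T : finType) (R : realFieldType) (v : vfun T R) : Prop :=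
  forall S : {set T}, S != [set: T] -> v S = 0.

(* Main.v *)
Require Import Defs.
From HB Require Import structures.
From mathcomp Require Import all_boot all_order all_algebra.
From mathcomp Require Import ring lra zify.
Import Order.TTheory GRing.Theory Num.Theory.
Local Open Scope ring_scope.

Definition ss (n k : nat) : nat := (\sum_(l < k.+1) 'C(n, l))%N.
Definition cc (R : realFieldType) (n k : nat) : R :=
  (\sum_(l < k.+1) ('C(n, l))%:R) / ('C(n.-1, k))%:R.

Lemma ccE (R : realFieldType) n k : cc R n k = (ss n k)%:R / ('C(n.-1, k))%:R.
Proof. by rewrite /cc /ss natr_sum. Qed.

Lemma ss_full n : (ss n.+1 n + 1 = 2 ^ n.+1)%N.
Proof.
have := expnDn 1 1 n.+1; rewrite addn1 big_ord_recr /= binn /ss => ->.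
congr (_ + _)%N; last by rewrite !exp1n.
by apply: eq_bigr => l _; rewrite !exp1n !muln1.
Qed.

Lemma cc_mulB (R : realFieldType) n k : (k <= n.-1)%N ->
  cc R n k * ('C(n.-1, k))%:R = (ss n k)%:R.
Proof.
move=> hk; rewrite ccE divfK // pnatr_eq0 -lt0n bin_gt0 //.
Qed.

Lemma cc_mulB' (R : realFieldType) N k : (k <= N)%N ->
  cc R N.+1 k * ('C(N, k))%:R = (ss N.+1 k)%:R.
Proof. by move=> h; rewrite cc_mulB. Qed.

Lemma comb (R : realFieldType) (k m : nat) :
  let n := (k + m).+1 in
  m%:R * (cc R n k.+1 - cc R n k) - k%:R * (cc R n k - cc R n k.-1)
  - 2 * cc R n k + (if m == 0%N then ((n * 2 ^ n)%N)%:R else 0) = 0 :> R.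
Proof.
move=> n.
set B : R := ('C(k + m, k))%:R.
have B0 : B != 0 by rewrite pnatr_eq0 -lt0n bin_gt0 leq_addr.
have hY : cc R n k * B = (ss n k)%:R by rewrite cc_mulB //= leq_addr.
apply: (mulIf B0); rewrite mul0r.
have -> : (m%:R * (cc R n k.+1 - cc R n k) - k%:R * (cc R n k - cc R n k.-1)
  - 2 * cc R n k + (if m == 0%N then ((n * 2 ^ n)%N)%:R else 0)) * B =
  m%:R * cc R n k.+1 * B + k%:R * cc R n k.-1 * B - (m + k + 2)%N%:R * (cc R n k * B)
  + (if m == 0%N then ((n * 2 ^ n)%N)%:R else 0) * B.
  by rewrite !natrD; ring.
rewrite hY.
have hbin : (k.+1 * 'C(n, k.+1) = m.+1 * 'C(n, k))%N.
  by rewrite mul_bin_left /n subSn ?leq_addr // addKn.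
have hbinR : k.+1%:R * ('C(n, k.+1))%:R = m.+1%:R * ('C(n, k))%:R :> R.
  by rewrite -!natrM hbin.
have hss1 : ss n k.+1 = (ss n k + 'C(n, k.+1))%N by rewrite /ss big_ord_recr.
have hX : m%:R * cc R n k.+1 * B = (if m is _.+1 then (k.+1 * ss n k.+1)%N else 0%N)%:R.
  case: m => [|m] in n B B0 hY hbin hbinR hss1 *.
    by rewrite !mul0r.
  have e : m.+1%:R * B = k.+1%:R * ('C(k + m.+1, k.+1))%:R.
    by rewrite /B -!natrM mul_bin_left addKn.
  rewrite mulrAC e -mulrA /n [_%:R * cc _ _ _]mulrC (cc_mulB' R (k + m.+1) k.+1)  ?natrM //.
  by rewrite addnS ltnS leq_addr.
have hZ : k%:R * cc R n k.-1 * B = (if k is k'.+1 then (m.+1 * ss n k')%N else 0%N)%:R.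
  case: k => [|k] in n B B0 hY hbin hbinR hss1 hX *.
    by rewrite !mul0r.
  have e : k.+1%:R * B = m.+1%:R * ('C(k.+1 + m, k))%:R.
    by rewrite /B -!natrM mul_bin_left subSn ?leq_addr // addKn.
  rewrite /= mulrAC e -mulrA /n [_%:R * cc _ _ _]mulrC (cc_mulB' R (k.+1 + m) k) ?natrM //.
  by rewrite addSn leqW // leq_addr.
rewrite hX hZ {hX hZ hY}.
case: m => [|m] in n B B0 hbin hbinR hss1 *; case: k => [|k] in n B B0 hbin hbinR hss1 *.
- rewrite /n /ss big_ord_recr big_ord0 /= bin0 /B binn.
  rewrite !(natrD, natrM, natrX). lra.
- have hs : (ss n k.+1 + 1 = 2 ^ n)%N by rewrite /n addn0 ss_full.
  have hss0 : ss n k.+1 = (ss n k + 'C(n, k.+1))%N by rewrite /ss big_ord_recr.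
  have hn : ('C(n, k.+1) = n)%N by rewrite /n addn0 binSn.
  rewrite /B addn0 binn mulr1 /=.
  rewrite -hs hss0 hn /n addn0. ring.
- rewrite /B /= mul0r addr0.
  have -> : ss n 1 = (1 + n)%N by rewrite /ss !big_ord_recr big_ord0 /= bin0 bin1.
  have -> : ss n 0 = 1%N by rewrite /ss big_ord_recr big_ord0 /= bin0.
  rewrite /n add0n. ring.
- have -> : (if m.+1 == 0%N then (n * 2 ^ n)%:R else 0) = 0 :> R by []. rewrite mul0r addr0.
  have hss0 : ss n k.+1 = (ss n k + 'C(n, k.+1))%N by rewrite /ss big_ord_recr.
  rewrite hss1 hss0.
  move: hbinR; set C1 := 'C(n, k.+1); set C2 := 'C(n, k.+2).
  set S0 := (ss n k) => hb.
  clearbody C1 C2 S0.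
  rewrite !natrM !natrD.
  apply: (@eq_trans _ _ (k.+2%:R * C2%:R - m.+2%:R * C1%:R)); first ring.
  by rewrite hb subrr.
Qed.

Lemma exch (T : finType) (R : realFieldType) (F : {set T} -> T -> R) (P : {set T} -> T -> bool) :
  \sum_(S : {set T}) \sum_(j | P S j) F S j = \sum_(j : T) \sum_(S | P S j) F S j.
Proof. by rewrite (exchange_big_dep xpredT). Qed.

Lemma reind (T : finType) (R : realFieldType) (G : {set T} -> R) (j : T) :
  \sum_(S : {set T} | j \notin S) G (j |: S) = \sum_(A : {set T} | j \in A) G A.
Proof.
rewrite [RHS](reindex_onto (fun S => j |: S) (fun A => A :\ j)); last first.
  by move=> A hA; rewrite setD1K.
symmetry; apply: eq_bigl => S; rewrite setU11 /=.
apply/eqP/idP => [<-|hS]; first by rewrite setD11.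
by rewrite setU1K.
Qed.

Lemma einner_dV (T : finType) (R : realFieldType) (h : efun T R) (w : vfun T R) :
  einner h (dV w) = \sum_(A : {set T}) w A *
     (\sum_(j in A) h (A :\ j) j - \sum_(j | j \notin A) h A j).
Proof.
rewrite /einner /dV.
transitivity (\sum_(S : {set T}) \sum_(j | j \notin S) h S j * w (j |: S)
   - \sum_(S : {set T}) \sum_(j | j \notin S) h S j * w S).
  rewrite -sumrB; apply: eq_bigr => S _; rewrite -sumrB.
  by apply: eq_bigr => j _; rewrite mulrBr.
transitivity (\sum_(A : {set T}) \sum_(j in A) w A * h (A :\ j) j
   - \sum_(A : {set T}) \sum_(j | j \notin A) w A * h A j); last first.
  rewrite -sumrB; apply: eq_bigr => A _.
  by rewrite mulrBr !big_distrr.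
congr (_ - _); last first.
  by apply: eq_bigr => S _; apply: eq_bigr => j _; rewrite mulrC.
rewrite exch (exch _ _ (fun A j => w A * h (A :\ j) j) (fun A j => j \in A)).
apply: eq_bigr => j _.
rewrite -(reind _ _ (fun A => w A * h (A :\ j) j)).
apply: eq_bigr => S hS; by rewrite setU1K // mulrC.
Qed.

Definition fcand (T : finType) (R : realFieldType) (v : vfun T R) (i : T) : vfun T R :=
  fun S => if i \in S then ((#|T| * 2 ^ #|T|)%N%:R)^-1 * (1 + cc R #|T| #|S :\ i|) * v [set: T]
           else ((#|T| * 2 ^ #|T|)%N%:R)^-1 * (1 - cc R #|T| #|S|) * v [set: T].
Arguments fcand {T R}.

Lemma sum_const_card (T : finType) (R : realFieldType) (P : pred T) (X : {set T}) (x : R) :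
  (forall j, P j = (j \in X)) -> \sum_(j | P j) x = x *+ #|X|.
Proof. by move=> h; rewrite (eq_bigl (fun j => j \in X)) // sumr_const. Qed.

Lemma alg1 (R : realFieldType) (K a c c0 c1 X : R) (k m : nat) :
  m%:R * (c1 - c) - k%:R * (c - c0) - 2 * c + X = 0 ->
  K * a * X - 2 * K * c * a + - (K * (c - c0) * a) *+ k - - (K * (c1 - c) * a) *+ m = 0.
Proof.
move=> E.
transitivity (K * a * (m%:R * (c1 - c) - k%:R * (c - c0) - 2 * c + X)); last by rewrite E mulr0.
ring.
Qed.

Lemma alg2 (R : realFieldType) (K a c c0 c1 X : R) (k m : nat) :
  m%:R * (c1 - c) - k%:R * (c - c0) - 2 * c + X = 0 ->
  - (K * (c0 - c) * a) *+ k - (K * a * X - 2 * K * c * a + - (K * (c - c1) * a) *+ m) = 0.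
Proof.
move=> E.
transitivity (- (K * a * (m%:R * (c1 - c) - k%:R * (c - c0) - 2 * c + X))); last by rewrite E mulr0 oppr0.
ring.
Qed.

Lemma div_zero (T : finType) (R : realFieldType) (v : vfun T R) (i : T)
  (hv : pure_bargaining v) (A : {set T}) :
  let h := fun S j => dI i v S j - dV (fcand v i) S j in
  \sum_(j in A) h (A :\ j) j - \sum_(j | j \notin A) h A j = 0.
Proof.
move=> h.
set n := #|T|. set K : R := ((n * 2 ^ n)%N%:R)^-1. set a := v [set: T].
have n0 : (0 < n)%N by apply/card_gt0P; exists i.
have hKN : K * (n * 2 ^ n)%N%:R = 1.
  by rewrite mulVf // pnatr_eq0 -lt0n muln_gt0 n0 expn_gt0.
have fin : forall S : {set T}, i \in S -> fcand v i S = K * (1 + cc R n #|S :\ i|) * a.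
  by move=> S hS; rewrite /fcand hS.
have fout : forall S : {set T}, i \notin S -> fcand v i S = K * (1 - cc R n #|S|) * a.
  by move=> S hS; rewrite /fcand (negbTE hS).
have vT : forall X : {set T}, i \notin X -> v X = 0.
  move=> X hX; apply: hv; apply: contraNneq hX => ->; exact: in_setT.
case: (boolP (i \in A)) => hiA.
- set k := #|A :\ i|. set m := #|~: A|.
  have hn : n = (k + m).+1.
    by rewrite /n -(cardsC A) (cardsD1 i A) hiA.
  have hvA : v A = K * a * (if m == 0%N then (n * 2 ^ n)%N%:R else 0).
    case: eqP => hm.
      rewrite /= mulrAC hKN mul1r /a; congr (v _); apply/eqP.
      by rewrite eqEcard subsetT cardsT -/n hn (cardsD1 i A) hiA -/k hm addn0 /= add1n ltnSn.
    rewrite /= mulr0; apply: hv; apply/eqP => eA; apply: hm; by rewrite /m eA setCT cards0.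
  rewrite (bigD1 i) //=.
  have e1 : h (A :\ i) i = v A - 2 * K * cc R n k * a.
    rewrite /h /dI /dV eqxx setD1K // fin // fout ?setD11 //.
    rewrite (vT (A :\ i)) ?setD11 //; ring.
  have e2 : forall j, (j \in A) && (j != i) -> h (A :\ j) j = - (K * (cc R n k - cc R n k.-1) * a).
    move=> j /andP [hjA hji].
    have hiAj : i \in A :\ j by rewrite in_setD1 eq_sym hji.
    rewrite /h /dI /dV (negbTE hji) setD1K // (fin A) // (fin (A :\ j)) //.
    have -> : #|A :\ j :\ i| = k.-1.
      move: (cardsD1 i (A :\ j)) (cardsD1 j A) (cardsD1 i A).
      rewrite hiAj hjA hiA -/k /=; lia.
    ring.
  have e3 : forall j, j \notin A -> h A j = - (K * (cc R n k.+1 - cc R n k) * a).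
    move=> j hjA.
    have hji : j != i by apply: contraNneq hjA => ->.
    rewrite /h /dI /dV (negbTE hji) (fin A) // (fin (j |: A)) ?in_setU1 ?hiA ?orbT //.
    have -> : #|(j |: A) :\ i| = k.+1.
      move: (cardsD1 i (j |: A)) (cardsU1 j A) (cardsD1 i A).
      rewrite in_setU1 hiA orbT hjA -/k /=; lia.
    ring.
  rewrite (eq_bigr _ e2) (eq_bigr _ e3) e1.
  rewrite (@sum_const_card T R _ (A :\ i)); last by move=> j; rewrite in_setD1 andbC.
  rewrite (@sum_const_card T R _ (~: A)); last by move=> j; rewrite in_setC.
  rewrite -/k -/m hvA.
  have := comb R k m; rewrite /= -hn.
  exact: alg1.
- set k := #|A|. set m := #|~: A :\ i|.
  have hn : n = (k + m).+1.
    rewrite /n -(cardsC A) (cardsD1 i (~: A)) in_setC hiA -/k -/m /=; lia.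
  have hvA : v (i |: A) = K * a * (if m == 0%N then (n * 2 ^ n)%N%:R else 0).
    case: eqP => hm.
      rewrite /= mulrAC hKN mul1r /a; congr (v _); apply/eqP.
      rewrite eqEcard subsetT cardsT -/n hn cardsU1 hiA -/k hm addn0 /=.
      by rewrite add1n ltnSn.
    rewrite /= mulr0; apply: hv; apply/eqP => eA; apply: hm.
    move: (cardsU1 i A); rewrite eA cardsT -/n hn hiA -/k /=; lia.
  rewrite [X in _ - X](bigD1 i) //=.
  have e1 : h A i = v (i |: A) - 2 * K * cc R n k * a.
    rewrite /h /dI /dV eqxx (fin (i |: A)) ?setU11 // setU1K // fout //.
    rewrite (vT A) //; ring.
  have e2 : forall j, j \in A -> h (A :\ j) j = - (K * (cc R n k.-1 - cc R n k) * a).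
    move=> j hjA.
    have hji : j != i by apply: contraTneq hjA => ->.
    have hiAj : i \notin A :\ j by rewrite in_setD1 (negbTE hiA) andbF.
    rewrite /h /dI /dV (negbTE hji) setD1K // (fout A) // (fout (A :\ j)) //.
    have -> : #|A :\ j| = k.-1.
      move: (cardsD1 j A); rewrite hjA -/k /=; lia.
    ring.
  have e3 : forall j, (j \notin A) && (j != i) -> h A j = - (K * (cc R n k - cc R n k.+1) * a).
    move=> j /andP [hjA hji].
    have hiAj : i \notin j |: A by rewrite in_setU1 eq_sym (negbTE hji) (negbTE hiA).
    rewrite /h /dI /dV (negbTE hji) (fout A) // (fout (j |: A)) //.
    have -> : #|j |: A| = k.+1.
      move: (cardsU1 j A); rewrite hjA -/k /=; lia.
    ring.
  rewrite (eq_bigr _ e2) (eq_bigr _ e3) e1.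
  rewrite (@sum_const_card T R _ A) //.
  rewrite (@sum_const_card T R _ (~: A :\ i)); last by move=> j; rewrite in_setD1 andbC in_setC.
  rewrite -/k -/m hvA.
  have := comb R k m; rewrite /= -hn.
  exact: alg2.
Qed.

Lemma einnerB (T : finType) (R : realFieldType) (p q x : efun T R) :
  einner (fun S j => p S j - q S j) x = einner p x - einner q x.
Proof.
rewrite /einner -sumrB; apply: eq_bigr => S _; rewrite -sumrB.
by apply: eq_bigr => j _; rewrite mulrBl.
Qed.

Lemma msq (R : realFieldType) (x : R) : 0 <= x * x.
Proof. by rewrite -expr2 sqr_ge0. Qed.

Lemma dV_orth0 (T : finType) (R : realFieldType) (g : vfun T R) :
  einner (dV g) (dV g) = 0 -> forall (S : {set T}) j, j \notin S -> g (j |: S) = g S.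
Proof.
rewrite /einner => H S j hj.
have hp : forall S' : {set T}, true -> 0 <= \sum_(k | k \notin S') dV g S' k * dV g S' k.
  by move=> S' _; apply: sumr_ge0 => k _; exact: msq.
have H1 := @psumr_eq0P _ _ _ _ hp H S isT.
have := @psumr_eq0P _ _ _ _ (fun j _ => msq _ _) H1 j hj.
by move/eqP; rewrite mulf_eq0 orbb /dV subr_eq0 => /eqP.
Qed.

Lemma const_g (T : finType) (R : realFieldType) (g : vfun T R) :
  (forall (S : {set T}) j, j \notin S -> g (j |: S) = g S) -> forall S, g S = g set0.
Proof.
move=> H S; move: {2}#|S| (erefl #|S|) => N; elim: N S => [|N IH] S hS.
  by move/eqP: hS; rewrite cards_eq0 => /eqP ->.
have /set0Pn [j hj] : S != set0 by rewrite -card_gt0 hS.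
rewrite -(setD1K hj) H ?setD11 // IH //.
by move: (cardsD1 j S); rewrite hj hS /= add1n => -[].
Qed.

Theorem theorem3p11 (T : finType) (R : realFieldType) (v : {set T} -> R) (i : T)
  (vi : {set T} -> R) :
  pure_bargaining v ->
  is_component_game v i vi ->
  forall S : {set T}, i \notin S ->
    let n := #|T| in
    let c := (\sum_(k < #|S|.+1) ('C(n, k))%:R) / ('C(n.-1, #|S|))%:R in
    vi (i |: S) = ((n * 2 ^ n)%N%:R)^-1 * (1 + c) * v [set: T] /\
    vi S = ((n * 2 ^ n)%N%:R)^-1 * (1 - c) * v [set: T].
Proof.
move=> hv [h0 [_ hort]] S hiS n c.
set f := fcand v i.
have hf : forall w, einner (fun S j => dI i v S j - dV f S j) (dV w) = 0.
  move=> w; rewrite einner_dV big1 // => A _.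
  by rewrite (div_zero _ _ _ _ hv A) mulr0.
set g : vfun T R := fun X => vi X - f X.
have hg : forall w, einner (dV g) (dV w) = 0.
  move=> w.
  transitivity (einner (fun S j => (dI i v S j - dV f S j) - (dI i v S j - dV vi S j)) (dV w)).
    rewrite /einner; apply: eq_bigr => X _; apply: eq_bigr => j _.
    by congr (_ * _); rewrite /dV /g; ring.
  by rewrite einnerB hf hort subrr.
have gc := const_g _ _ _ (dV_orth0 _ _ _ (hg g)).
have f0 : f set0 = 0.
  rewrite /f /fcand in_set0 cards0 /cc big_ord1 !bin0 divr1 subrr.
  by rewrite mulr0 mul0r.
have ef : forall X, vi X = f X.
  by move=> X; apply/eqP; rewrite -subr_eq0 -/(g X) gc /g h0 f0 subrr.
rewrite !ef /f /fcand setU11 setU1K // (negbTE hiS).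
by split.
Qed.
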